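(* Let $F$ be a forest and $G$ be a graph, both on $n$ vertices. Let $\mathrm{comp}(F)$ be the number of components of $F$ that contain at least one edge, and let $\ell(F)$ be the number of vertices of $F$ of degree $1$. If $$3\Delta(G)+\ell(F)-2\,\mathrm{comp}(F)<n,$$ then $F$ and $G$ pack.
   Context: All graphs are finite and simple; $\Delta(G)$ is the maximum degree of $G$. For graphs $G$ and $H$ with $|V(G)|\ge |V(H)|$, we say $G$ and $H$ pack if there is an injective function $f:V(H)\to V(G)$ such that for every edge $xy\in E(H)$, $f(x)f(y)\notin E(G)$ (equivalently, both can be embedded in $K_{|V(G)|}$ with no edge in common). *)

(* Defs.v *)
From mathcomp Require Import all_boot.
Set Implicit Arguments. Unset Strict Implicit. Unset Printing Implicit Defensive.

Section Graphs.
Variable T : finType.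

Definition simple_graph (e : rel T) : Prop := symmetric e /\ irreflexive e.

Definition deg (e : rel T) (x : T) : nat := #|[set y | e x y]|.

Definition maxdeg (e : rel T) : nat := \max_(x : T) deg e x.

Definition has_cycle (e : rel T) : Prop :=
  exists c : seq T, [/\ 3 <= size c, uniq c & cycle e c].

Definition forest (e : rel T) : Prop := simple_graph e /\ ~ has_cycle e.

Definition comp_nontriv (e : rel T) : nat :=
  #|[set [set y | connect e x y] | x in [set x : T | 0 < deg e x]]|.

Definition leaves (e : rel T) : nat := #|[set x : T | deg e x == 1]|.

End Graphs.

Definition pack (TG TH : finType) (eG : rel TG) (eH : rel TH) : Prop :=
  exists f : TH -> TG, injective f /\ forall x y, eH x y -> ~~ eG (f x) (f y).

(* Main.v *)
Require Import Defs.
From mathcomp Require Import all_boot zify.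
Set Implicit Arguments. Unset Strict Implicit. Unset Printing Implicit Defensive.


Section Leaf.
Variable T : finType.
Variable F : rel T.
Hypothesis Fsym : symmetric F.
Hypothesis Firr : irreflexive F.
Hypothesis Fnc : ~ has_cycle F.

Lemma leaf_step k : forall x z p, #|T| - size p <= k -> F x z -> path F z p ->
  uniq (x :: z :: p) -> exists u, deg F u == 1.
Proof.
elim: k => [|k IH] x z p Hk Hxz Hp Hu.
- (* size p >= #|T| impossible: uniq of size p.+2 *)
  exfalso. have := card_uniqP Hu. move: (max_card (mem (x :: z :: p))) => H1 H2.
  rewrite H2 /= in H1. move: Hk; rewrite leqn0 subn_eq0 => Hk.
  have := leq_trans H1 Hk. by rewrite /= ltnNge leqnSn.
- case: (boolP [exists y, F x y && (y != z)]) => [/existsP [y /andP [Fxy yz]]|].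
  + case: (boolP (y \in x :: z :: p)) => yin.
    * exfalso. apply: Fnc. rewrite in_cons in yin.
      case/orP: yin => [/eqP yx|yin]; first by move: Fxy; rewrite yx Firr.
      rewrite in_cons (negbTE yz) /= in yin.
      case/splitPr: yin Hp Hu => p1 p2 Hp Hu.
      exists (x :: z :: rcons p1 y); split.
      * by rewrite /= size_rcons.
      * apply: subseq_uniq Hu. rewrite -cats1.
        have -> : x :: z :: p1 ++ [:: y] = (x :: z :: p1) ++ [:: y] by [].
        have -> : x :: z :: p1 ++ y :: p2 = (x :: z :: p1) ++ (y :: p2) by [].
        by rewrite subseq_cat2l (prefix_subseq [:: y] p2).
      * rewrite /cycle /= Hxz rcons_path.
        move: Hp; rewrite cat_path /= => /and3P [H1 H2 _]. idtac.
        by rewrite rcons_path H1 H2 last_rcons Fsym.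
    * have := IH y x (z :: p). apply.
      -- move: Hk; rewrite /= subnS. by case: (#|T| - size p).
      -- by rewrite Fsym.
      -- by rewrite /= Hxz Hp.
      -- by rewrite (cons_uniq y) yin Hu.
  + rewrite negb_exists => /forallP Hall. exists x.
    apply/eqP. rewrite /deg (_ : [set y | F x y] = [set z]) ?cards1 //. apply/setP => y.
    rewrite !inE. have := Hall y. rewrite negb_and negbK.
    case/orP => [Hn|/eqP ->]; last by rewrite Hxz eqxx.
    rewrite (negbTE Hn). apply/esym/negbTE; apply/eqP => yz. by move: Hn; rewrite yz Hxz.
Qed.

Lemma leaf_exists x y : F x y -> exists u, deg F u == 1.
Proof.
move=> Hxy. apply: (@leaf_step (#|T|) x y [::]) => //.
- by rewrite leq_subr.
- rewrite /= inE andbT; apply/eqP => e; move: Hxy; by rewrite e Firr.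
Qed.
End Leaf.


Section Del.
Variable T : finType.
Variable F : rel T.
Hypothesis Fsym : symmetric F.
Hypothesis Firr : irreflexive F.
Variables u v : T.
Hypothesis Fuv : F u v.
Hypothesis Fu : forall y, F u y -> y = v.

Definition F' := [rel x y | F x y && (x != u) && (y != u)].

Lemma uv : u != v.
Proof. by apply/eqP => e; move: Fuv; rewrite e Firr. Qed.

Lemma F'sub x y : F' x y -> F x y.
Proof. by case/andP => /andP []. Qed.

Lemma F'sym : symmetric F'.
Proof. by move=> x y; rewrite /F' /= Fsym andbAC. Qed.

Lemma F'irr : irreflexive F'.
Proof. by move=> x; rewrite /F' /= Firr. Qed.

Lemma F'u y : F' u y = false.
Proof. by rewrite /F' /= eqxx andbF. Qed.

Lemma F'yu y : F' y u = false.
Proof. by rewrite /F' /= eqxx andbF. Qed.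

Lemma Fxu x : F x u -> x = v.
Proof. by rewrite Fsym => /Fu. Qed.

Lemma deg_le (e1 e2 : rel T) x : subrel e1 e2 -> deg e1 x <= deg e2 x.
Proof. by move=> H; apply: subset_leq_card; apply/subsetP => y; rewrite !inE => /H. Qed.

Lemma degF'_le x : deg F' x <= deg F x.
Proof. by apply: deg_le => a b /F'sub. Qed.

Lemma degF'_u : deg F' u = 0.
Proof. apply/eqP; rewrite cards_eq0; apply/eqP/setP => y; rewrite !inE. by rewrite /F' /= eqxx andbF. Qed.

Lemma degF_u : deg F u = 1.
Proof.
rewrite /deg (_ : [set y | F u y] = [set v]) ?cards1 //.
apply/setP => y; rewrite !inE. apply/idP/eqP => [/Fu //|->]. exact Fuv.
Qed.

Lemma degF'_o x : x != u -> x != v -> deg F' x = deg F x.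
Proof.
move=> xu xv. apply: eq_card => y; rewrite !inE /F' /= xu andbT.
case: (boolP (y == u)) => [/eqP ->|]; rewrite ?andbT //.
by rewrite andbF; apply/esym/negbTE; apply/negP => /Fxu/eqP; rewrite (negbTE xv).
Qed.

Lemma degF'_v : deg F v = (deg F' v).+1.
Proof.
rewrite /deg (cardsD1 u) inE Fsym Fuv add1n. congr (_.+1). apply: eq_card => y. rewrite !inE /F' /=. have vu : (v != u) by rewrite eq_sym uv. by rewrite vu andbT andbC.
Qed.

Lemma F'_nocycle : ~ has_cycle F -> ~ has_cycle F'.
Proof.
move=> H [c [c3 cu cc]]; apply: H; exists c; split => //.
by apply: sub_cycle cc => a b /F'sub.
Qed.


Definition cls (e : rel T) x := [set y | connect e x y].
Definition NI (e : rel T) := [set x | 0 < deg e x].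

Lemma compE (e : rel T) : comp_nontriv e = #|[set cls e x | x in NI e]|.
Proof. by []. Qed.

Lemma cls_eq (e : rel T) : symmetric e -> forall x y, connect e x y -> cls e x = cls e y.
Proof.
move=> es x y xy; apply/setP => z; rewrite !inE; apply/idP/idP => H.
- apply: connect_trans H. by rewrite (sym_connect_sym es).
- exact: connect_trans xy H.
Qed.

Lemma path_F' x p : path F x p -> all (fun z => z != u) (x :: p) -> path F' x p.
Proof.
elim: p x => [//|y p IH] x /= /andP [Fxy Hp] /and3P [xu yu Ha].
rewrite /F' /= Fxy xu yu /=. apply: IH => //=. by rewrite yu.
Qed.

Lemma conn_F'_F x y : x != u -> y != u -> connect F x y -> connect F' x y.
Proof.
move=> xu yu /connectP [p Hp yE]. subst y.
case/shortenP: Hp yu => p' Hp' Uq _ yu.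
case: (boolP (u \in p')) => up.
- exfalso. case/splitPr: up Hp' Uq yu => p1 p2.
  rewrite cat_path /= => /and3P [_ H1 H2] Uq.
  rewrite last_cat /=.
  case: p2 H2 Uq => [|b p3]; first by rewrite eqxx.
  rewrite /= => /andP [/Fu Eb _] Uq _. subst b.
  move/Fxu: H1 => Hl.
  have : v \in x :: p1 by rewrite -Hl mem_last.
  move: Uq => /= /andP [xn Un]. rewrite in_cons => /orP [/eqP xv|vp1].
  + by move: xn; rewrite mem_cat xv !inE eqxx !orbT.
  + move: Un; rewrite cat_uniq => /and3P [_ /hasPn Hn _].
    have := Hn v. rewrite !inE eqxx orbT => /(_ isT). by rewrite /= vp1.
- apply/connectP; exists p' => //. apply: path_F' => //=.
  rewrite xu /=. apply/allP => z zp. by apply/eqP => e; subst z; rewrite zp in up.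
Qed.

Lemma conn_iso (e : rel T) x y : deg e x = 0 -> connect e x y -> x = y.
Proof.
move=> d0 /connectP [[|z p] Hp ->] //=.
move: Hp => /= /andP [exz _]. exfalso.
move/eqP: d0; rewrite cards_eq0 => /eqP/setP/(_ z). by rewrite !inE exz.
Qed.

Lemma conn_F'_u x : connect F' x u -> x = u.
Proof.
move/connectP => [p Hp]. case/lastP: p Hp => [//|q z]. 
rewrite rcons_path last_rcons => /andP [_ H] E. subst z.
by move: H; rewrite /F' /= eqxx andbF.
Qed.

Lemma clsF' x : x != u -> cls F' x = cls F x :\ u.
Proof.
move=> xu; apply/setP => y; rewrite !inE.
case: (boolP (y == u)) => [/eqP ->|yu] /=.
- by apply/negbTE/negP => /conn_F'_u /eqP; rewrite (negbTE xu).
- apply/idP/idP; last exact: conn_F'_F.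
  apply: connect_sub => a b /F'sub ab. exact: connect1.
Qed.

Lemma card_cls_restrict (A : {set T}) : u \notin A ->
  #|[set cls F' x | x in A]| = #|[set cls F x | x in A]|.
Proof.
move=> uA.
have -> : [set cls F' x | x in A] = [set C :\ u | C in [set cls F x | x in A]].
  rewrite -imset_comp. apply: eq_in_imset => x xA /=. apply: clsF'.
  by apply/eqP => e; subst x; rewrite xA in uA.
rewrite card_in_imset // => C D /imsetP [x xA ->] /imsetP [y yA ->] H.
have xu : x != u by apply/eqP => e; subst x; rewrite xA in uA.
have : x \in cls F x :\ u by rewrite !inE xu connect0.
rewrite H !inE => /andP [_ yx]. apply: cls_eq => //.
by rewrite (sym_connect_sym Fsym).
Qed.

Lemma clsuv : cls F u = cls F v.
Proof. apply: cls_eq => //. exact: connect1. Qed.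

Lemma comp_del : comp_nontriv F = comp_nontriv F' + (deg F v == 1).
Proof.
rewrite !compE.
have vu : v != u by rewrite eq_sym uv.
have dv := degF'_v.
case: (boolP (deg F v == 1)) => [/eqP d1|dn1].
- have dv0 : deg F' v = 0 by move: dv; rewrite d1 => -[].
  have -> : NI F' = NI F :\ u :\ v.
    apply/setP => x; rewrite !inE.
    case: (boolP (x == v)) => [/eqP ->|xv]; first by rewrite dv0.
    case: (boolP (x == u)) => [/eqP ->|xu]; first by rewrite degF'_u.
    by rewrite degF'_o.
  rewrite card_cls_restrict; last by rewrite !inE eqxx andbF.
  have -> : [set cls F x | x in NI F] = cls F v |: [set cls F x | x in NI F :\ u :\ v].
    apply/setP => C; rewrite !inE; apply/imsetP/idP.
    + move=> [x xN ->].
      case: (boolP (x == v)) => [/eqP ->|xv]; first by rewrite eqxx.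
      case: (boolP (x == u)) => [/eqP ->|xu]; first by rewrite clsuv eqxx.
      apply/orP; right; apply/imsetP; exists x => //; by rewrite !in_setD1 xv xu xN.
    + case/orP => [/eqP ->|/imsetP [x]]; first by exists v; rewrite // inE d1.
      rewrite !inE => /and3P [_ _ xN] ->. by exists x; rewrite // inE.
  rewrite cardsU1 addnC. congr (_ + _). congr (nat_of_bool _).
  apply/negP => /imsetP [x]. rewrite !inE => /and3P [xv xu _] E.
  have : x \in cls F v by rewrite E inE connect0.
  rewrite inE => /(conn_F'_F vu xu) /(conn_iso dv0) /eqP. by rewrite eq_sym (negbTE xv).
- have -> : NI F' = NI F :\ u.
    apply/setP => x; rewrite !inE.
    case: (boolP (x == v)) => [/eqP ->|xv]; first rewrite vu /= dv. by rewrite ltn0Sn lt0n -eqSS -dv.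
    case: (boolP (x == u)) => [/eqP ->|xu]; first by rewrite degF'_u.
    by rewrite degF'_o.
  rewrite card_cls_restrict; last by rewrite !inE eqxx.
  rewrite addn0. apply: eq_card => C; apply/imsetP/imsetP.
  + move=> [x xN ->]. case: (boolP (x == u)) => [/eqP ->|xu].
    * exists v; last by rewrite clsuv. by rewrite in_setD1 vu inE dv.
    * by exists x; rewrite // in_setD1 xu xN.
  + move=> [x]; rewrite !inE => /andP [_ xN] ->; by exists x; rewrite // inE.
Qed.

End Del.


Section Ind.
Variable T : finType.

Lemma forest_ind (P : rel T -> Prop) :
  (forall F, simple_graph F -> (forall x y, ~~ F x y) -> P F) ->
  (forall F u v, forest F -> F u v -> (forall y, F u y -> y = v) -> P (F' F u) -> P F) ->
  forall F, forest F -> P F.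
Proof.
move=> H0 HS F FF.
move: {-1}(\sum_x deg F x) (leqnn (\sum_x deg F x)) => k.
elim: k F FF => [|k IH] F [[Fsym Firr] Fnc] Hk.
- apply: H0 => //. move=> x y; apply/negP => Fxy.
  move: Hk; rewrite leqn0 sum_nat_eq0 => /forallP /(_ x) /implyP /(_ isT).
  rewrite cards_eq0 => /eqP /setP /(_ y). by rewrite !inE Fxy.
- case: (boolP [exists x, exists y, F x y]) => [/existsP [x /existsP [y Fxy]]|Hn]; last first.
    apply: H0 => //. move=> x y; apply/negP => Fxy. move/negP: Hn; apply.
    by apply/existsP; exists x; apply/existsP; exists y.
  have [u /cards1P [v Hv]] := leaf_exists Fsym Firr Fnc Fxy.
  have Fuv : F u v by move/setP: Hv => /(_ v); rewrite !inE eqxx.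
  have Fu : forall y, F u y -> y = v.
    by move=> z Fz; move/setP: Hv => /(_ z); rewrite !inE Fz => /esym /eqP.
  apply: (HS F u v) => //.
  apply: IH.
  + split; first split.
    * exact: F'sym.
    * exact: F'irr.
    * exact: F'_nocycle.
  + rewrite -ltnS. apply: leq_trans Hk.
    rewrite (bigD1 u) //= [X in _ < X](bigD1 u) //= (degF'_u F u) (degF_u Fuv Fu).
    rewrite add0n add1n ltnS. apply: leq_sum => z _. exact: degF'_le.
Qed.

Definition Ex (e : rel T) := \sum_x (deg e x - 2).

Lemma leavesE (e : rel T) : leaves e = \sum_x (deg e x == 1 : nat).
Proof.
rewrite /leaves -sum1_card big_mkcond /=. apply: eq_bigr => x _.
by rewrite inE; case: (_ == 1).
Qed.

Lemma sum_swap (u v : T) (g1 g2 : T -> nat) : u != v ->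
  (forall x, x != u -> x != v -> g1 x = g2 x) ->
  \sum_x g1 x + g2 u + g2 v = \sum_x g2 x + g1 u + g1 v.
Proof.
move=> uv H. have vu : v != u by rewrite eq_sym.
have sp : forall g : T -> nat, \sum_x g x = g u + g v + \sum_(x | (x != u) && (x != v)) g x.
  by move=> g; rewrite (bigD1 u) //= (bigD1 v) //= addnA.
rewrite !sp (eq_bigr g2); last by move=> x /andP [xu xv]; apply: H.
lia.
Qed.

Lemma forest_count (F : rel T) : forest F -> Ex F + 2 * comp_nontriv F <= leaves F.
Proof.
move: F. apply: (@forest_ind (fun F => Ex F + 2 * comp_nontriv F <= leaves F)).
- move=> F _ H. rewrite /Ex big1 ?add0n.
  + rewrite /comp_nontriv (_ : [set x | 0 < deg F x] = set0) ?imset0 ?cards0 //.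
    apply/setP => x; rewrite !inE lt0n cards_eq0; apply/negbTE; rewrite negbK. apply/eqP/setP => y.
    by rewrite !inE (negbTE (H x y)).
  + move=> x _. suff -> : deg F x = 0 by [].
    apply/eqP; rewrite cards_eq0. apply/eqP/setP => y. by rewrite !inE (negbTE (H x y)).
- move=> F u v [[Fsym Firr] _] Fuv Fu IH.
  have uv := uv Firr Fuv.
  have dv := degF'_v Fsym Firr Fuv.
  have hE : Ex F + (deg (F' F u) u - 2) + (deg (F' F u) v - 2)
          = Ex (F' F u) + (deg F u - 2) + (deg F v - 2).
    apply: sum_swap => // x xu xv. by rewrite (degF'_o Fsym Fu).
  have hL : leaves F + (deg (F' F u) u == 1) + (deg (F' F u) v == 1)
          = leaves (F' F u) + (deg F u == 1) + (deg F v == 1).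
    rewrite !leavesE. apply: sum_swap => // x xu xv. by rewrite (degF'_o Fsym Fu).
  have hC := comp_del Fsym Firr Fuv Fu.
  rewrite (degF'_u F u) (degF_u Fuv Fu) dv /= addn0 in hE hL.
  rewrite hC dv. move: hE hL IH.
  case: (deg (F' F u) v) => [|[|d]] /= hE hL IH. all: lia.
Qed.
End Ind.


Section Main.
Variable T : finType.
Variable G : rel T.
Hypothesis Gsym : symmetric G.
Hypothesis Girr : irreflexive G.

Lemma card_bigcup_le (Z : {set T}) (S : T -> {set T}) :
  #|\bigcup_(z in Z) S z| <= \sum_(z in Z) #|S z|.
Proof.
apply: (big_ind2 (fun (A : {set T}) n => #|A| <= n)) => //.
- by rewrite cards0.
- move=> A1 n1 A2 n2 h1 h2. apply: leq_trans (leq_card_setU A1 A2) _. exact: leq_add.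
Qed.

Lemma sum_sub_le (Z : {set T}) (g : T -> nat) : \sum_(z in Z) g z <= \sum_z g z.
Proof.
rewrite big_mkcond /=. apply: leq_sum => z _. by case: (z \in Z).
Qed.

Lemma deg_pre (f : T -> T) (y : T) : injective f ->
  #|[set z | G y (f z)]| = deg G y.
Proof.
move=> fi. rewrite /deg -(card_preimset [set z | G y z] fi). apply: eq_card => z. by rewrite !inE.
Qed.

Definition swp (u w x : T) := if x == u then w else if x == w then u else x.

Lemma swp_inv u w : cancel (swp u w) (swp u w).
Proof.
move=> x. rewrite /swp.
case: (boolP (x == u)) => [/eqP ->|xu].
- rewrite eqxx. case: (boolP (w == u)) => [/eqP -> //|wu]. by [].
- case: (boolP (x == w)) => [/eqP Ex|xw]; first by subst x; rewrite ?(negbTE xu) ?eqxx.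
  by rewrite (negbTE xu) (negbTE xw).
Qed.

Lemma pack_main (F : rel T) : forest F -> 3 * maxdeg G + Ex F < #|T| ->
  exists f : T -> T, injective f /\ forall x y, F x y -> ~~ G (f x) (f y).
Proof.
move: F. apply: (@forest_ind T (fun F => 3 * maxdeg G + Ex F < #|T| ->
  exists f : T -> T, injective f /\ forall x y, F x y -> ~~ G (f x) (f y))).
- move=> F _ H _. exists id; split => // x y. by rewrite (negbTE (H x y)).
- move=> F u v [[Fsym Firr] _] Fuv Fu IH Hn.
  have uv := uv Firr Fuv.
  have dv := degF'_v Fsym Firr Fuv.
  have hE : Ex (F' F u) <= Ex F.
    apply: leq_sum => x _. apply: leq_sub2r. exact: degF'_le.
  have [f [fi Hf]] : exists f : T -> T, injective f /\
      forall x y, F' F u x y -> ~~ G (f x) (f y).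
    apply: IH. apply: leq_trans Hn. by rewrite ltnS leq_add2l.
  have F'E : forall x y, x != u -> y != u -> F x y -> F' F u x y.
    by move=> x y xu yu Fxy; rewrite /F' /= Fxy xu yu.
  case: (boolP (G (f u) (f v))) => Guv; last first.
    exists f; split => // x y Fxy.
    case: (boolP (x == u)) => [/eqP Ex|xu].
      subst x. by rewrite (Fu _ Fxy).
    case: (boolP (y == u)) => [/eqP Ey|yu].
      subst y. by rewrite (Fxu Fsym Fu Fxy) Gsym.
    by apply: Hf; apply: F'E.
  pose A1 := [set w | G (f v) (f w)].
  pose Z := [set z | G (f u) (f z)].
  pose A2 := \bigcup_(z in Z) [set w | F' F u z w].
  have Dmax : forall x, deg G x <= maxdeg G by move=> x; apply: leq_bigmax.
  have cA1 : #|A1| <= maxdeg G by rewrite deg_pre.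
  have cZ : #|Z| <= maxdeg G by rewrite deg_pre.
  have vZ : v \in Z by rewrite inE.
  have cA2 : #|A2| + 1 <= 2 * maxdeg G + Ex F.
    apply: leq_trans (leq_add (card_bigcup_le _ _) (leqnn 1)) _.
    have e1 : \sum_(z in Z) (z == v : nat) = 1.
      rewrite (bigD1 v) //= eqxx big1 // => z /andP [_ zv]. by rewrite (negbTE zv).
    rewrite -[in X in X <= _]e1 -big_split /=.
    apply: (@leq_trans (\sum_(z in Z) (2 + (deg F z - 2)))).
      apply: leq_sum => z _. 
      case: (boolP (z == v)) => [/eqP ->|zv].
      + change (deg (F' F u) v + 1 <= 2 + (deg F v - 2)). rewrite dv. move: (deg (F' F u) v) => a. clear. lia.
      + change (deg (F' F u) z + 0 <= 2 + (deg F z - 2)). have := degF'_le F u z. move: (deg (F' F u) z) (deg F z) => a b. clear. lia.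
    rewrite big_split /= sum_nat_const.
    apply: leq_add; first by move: cZ; move: #|Z| (maxdeg G) => a b; clear; lia.
    exact: sum_sub_le.
  pose B := [set v] :|: A1 :|: A2.
  have cB : #|B| < #|T|.
    apply: (@leq_ltn_trans (1 + #|A1| + #|A2|)).
      rewrite /B. apply: leq_trans (leq_card_setU _ _) _. rewrite leq_add2r.
      apply: leq_trans (leq_card_setU _ _) _. by rewrite cards1.
    apply: leq_trans Hn. move: cA1 cA2. move: #|A1| #|A2| (maxdeg G) (Ex F) => a b m e. clear. lia.
  have [w wB] : exists w, w \notin B.
    apply/existsP. rewrite -negb_forall. apply/negP => /forallP Hall.
    have : #|T| <= #|B| by apply: subset_leq_card; apply/subsetP => x _; exact: Hall.
    by rewrite leqNgt cB.
  move: wB. rewrite !inE => /norP [/norP [wv wA1] wA2].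
  have wu : w != u by apply/eqP => e; move: wA1; rewrite e Gsym Guv.
  have wA2' : forall z, F' F u w z -> ~~ G (f u) (f z).
    move=> z Hz. apply/negP => Gz. move/negP: wA2; apply.
    apply/bigcupP; exists z; first by rewrite inE.
    move: Hz; rewrite inE /F' /= Fsym; by rewrite andbAC.
  exists (f \o swp u w); split.
    apply: inj_comp => //. exact: can_inj (swp_inv u w).
  have su : swp u w u = w by rewrite /swp eqxx.
  have sw : swp u w w = u by rewrite /swp (negbTE wu) eqxx.
  have so : forall x, x != u -> x != w -> swp u w x = x.
    by move=> x xu xw; rewrite /swp (negbTE xu) (negbTE xw).
  have vu : v != u by rewrite eq_sym.
  move=> x y Fxy /=.
  case: (boolP (x == u)) => [/eqP Ex|xu].
    subst x. have Ey := Fu _ Fxy. subst y. rewrite su (so v vu); last by rewrite eq_sym.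
    by rewrite Gsym.
  case: (boolP (y == u)) => [/eqP Ey|yu].
    subst y. have Ex := Fxu Fsym Fu Fxy. subst x. rewrite su (so v vu); last by rewrite eq_sym. exact: wA1.
  case: (boolP (x == w)) => [/eqP Ex|xw].
    subst x. rewrite sw so //; last by apply/eqP => e; move: Fxy; rewrite e Firr.
    apply: wA2'. exact: F'E.
  case: (boolP (y == w)) => [/eqP Ey|yw].
    subst y. rewrite sw so //.
    rewrite Gsym.
    apply: wA2'. apply: F'E => //. by rewrite Fsym.
  rewrite !so //. apply: Hf. exact: F'E.
Qed.

End Main.


Theorem theorem8 (n : nat) (F G : rel 'I_n) :
  forest F -> simple_graph G ->
  3 * maxdeg G + leaves F < n + 2 * comp_nontriv F ->
  pack G F.
Proof.
move=> HF [Gsym Girr] H.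
have HC := forest_count HF.
have Hlt : 3 * maxdeg G + Ex F < #|'I_n|.
  rewrite card_ord. move: H HC. move: (maxdeg G) (leaves F) (comp_nontriv F) (Ex F) => a b c d. clear. lia.
have [f [fi Hf]] := pack_main Gsym HF Hlt.
by exists f.
Qed.
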